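(* Let $d_{21}$ be the 3-dimensional complex associative algebra with basis $\{e_1,e_2,e_3\}$ and nonzero products $e_1e_1=e_3$, $e_1e_2=e_3$, $e_2e_1=-e_3$. For every Hermitian inner product $\langle\cdot,\cdot\rangle$ on $d_{21}$ there exist $k>0$, $a>0$ and an automorphism $\phi$ of $d_{21}$ such that $\{a\phi e_1,\phi e_2,\phi e_3\}$ is an orthonormal basis with respect to $k\langle\cdot,\cdot\rangle$.
   Context: An automorphism of an algebra is an invertible linear map $\phi$ with $\phi(xy)=\phi(x)\phi(y)$. All products of basis vectors of $d_{21}$ not listed are zero. *)

(* Defs.v *)
(* The complex numbers are modelled as R[i] = complex R
   (mathcomp-real-closed) over an arbitrary R : realType (the real numbers). *)
From mathcomp Require Import all_boot all_algebra.
From mathcomp Require Import reals.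
From mathcomp.real_closed Require Import complex.
Set Implicit Arguments. Unset Strict Implicit. Unset Printing Implicit Defensive.
Import GRing.Theory Num.Theory.
Local Open Scope ring_scope.

Section D21.
Variable R : realType.
Local Notation C := (R[i]).
Local Notation V := ('rV[C]_3).

(* standard basis e_1, e_2, e_3  (indices 0, 1, 2) *)
Definition d21_e (i : 'I_3) : V := delta_mx 0 i.

(* bilinear product of d_21: e1e1 = e3, e1e2 = e3, e2e1 = -e3, others 0 *)
Definition d21_mul (x y : V) : V :=
  (x 0 0 * y 0 0 + x 0 0 * y 0 1 - x 0 1 * y 0 0) *: d21_e 2.

Definition d21_automorphism (phi : V -> V) : Prop :=
  [/\ forall (c : C) (x y : V), phi (c *: x + y) = c *: phi x + phi y,
      bijective phi
    & forall x y : V, phi (d21_mul x y) = d21_mul (phi x) (phi y)].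

Definition hermitian_inner_product (ip : V -> V -> C) : Prop :=
  [/\ forall (c : C) (x y z : V), ip (c *: x + y) z = c * ip x z + ip y z,
      forall x y : V, ip y x = (ip x y)^*
    & forall x : V, x != 0 -> 0 < ip x x].

Definition orthonormal_basis (ip : V -> V -> C) (b : 'I_3 -> V) : Prop :=
  row_free (\matrix_(i < 3) b i) /\
  forall i j : 'I_3, ip (b i) (b j) = (i == j)%:R.

End D21.

(* Main.v *)
Require Import Defs.
From mathcomp Require Import all_boot all_algebra.
From mathcomp Require Import reals.
From mathcomp.real_closed Require Import complex.
From mathcomp Require Import ring order.
Import GRing.Theory Num.Theory Order.TTheory.
Local Open Scope ring_scope.

Lemma det3_ut (F : comPzRingType) (M : 'M[F]_3) :
  M 1 0 = 0 -> M 2 0 = 0 -> M 2 1 = 0 -> \det M = M 0 0 * M 1 1 * M 2 2.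
Proof.
move=> h10 h20 h21; rewrite -det_tr det_trig.
  rewrite !big_ord_recr big_ord0 /= !mxE mul1r.
  by congr (M _ _ * M _ _ * M _ _); apply/val_inj.
apply/forallP => i; apply/forallP => j; apply/implyP; rewrite mxE.
case: i => [[|[|[|?]]] ?] //; case: j => [[|[|[|?]]] ?] //= _; apply/eqP.
all: [> rewrite -h10 | rewrite -h20 | rewrite -h21]; congr (M _ _); exact/val_inj.
Qed.

Lemma mul3 (F : pzSemiRingType) (x : 'rV[F]_3) (P : 'M[F]_3) j :
  (x *m P) 0 j = x 0 0 * P 0 j + x 0 1 * P 1 j + x 0 2 * P 2 j.
Proof.
rewrite mxE !big_ord_recr big_ord0 /= add0r.
by congr (_ + _ + _); congr (x 0 _ * P _ j); apply/val_inj.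
Qed.

Section IP.
Variable R : realType.
Variable ip : 'rV[R[i]]_3 -> 'rV[R[i]]_3 -> R[i].
Hypothesis H : hermitian_inner_product ip.

Lemma ip0l z : ip 0 z = 0.
Proof. case: H => h _ _. have := h 1 0 0 z. rewrite scaler0 addr0 mul1r.
move=> E; apply: (addrI (ip 0 z)); by rewrite addr0 -E. Qed.
Lemma ipZl c x z : ip (c *: x) z = c * ip x z.
Proof. case: H => h _ _. by rewrite -[c *: x]addr0 h ip0l addr0. Qed.
Lemma ipDl x y z : ip (x + y) z = ip x z + ip y z.
Proof. case: H => h _ _. by have := h 1 x y z; rewrite scale1r mul1r. Qed.
Lemma ipBl x y z : ip (x - y) z = ip x z - ip y z.
Proof. by rewrite ipDl -scaleN1r ipZl mulN1r. Qed.
Lemma ipZr c x z : ip z (c *: x) = c^* * ip z x.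
Proof. case: H => _ h _. by rewrite h ipZl rmorphM /= -h. Qed.
Lemma ipDr x y z : ip z (x + y) = ip z x + ip z y.
Proof. case: H => _ h _. by rewrite h ipDl rmorphD /= -!h. Qed.
Lemma ipBr x y z : ip z (x - y) = ip z x - ip z y.
Proof. case: H => _ h _. by rewrite h ipBl rmorphB /= -!h. Qed.
Lemma ipC x y : ip y x = (ip x y)^*.
Proof. by case: H. Qed.
Lemma ippos x : x != 0 -> 0 < ip x x.
Proof. by case: H => _ _; apply. Qed.
End IP.

Theorem lemma5p1 (R : realType) (ip : 'rV[R[i]]_3 -> 'rV[R[i]]_3 -> R[i]) :
  hermitian_inner_product ip ->
  exists (k a : R[i]) (phi : 'rV[R[i]]_3 -> 'rV[R[i]]_3),
    [/\ 0 < k, 0 < a, d21_automorphism phi &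
        orthonormal_basis (fun x y => k * ip x y)
          (fun i : 'I_3 =>
             if i == 0 then a *: phi (d21_e R 0) else phi (d21_e R i))].
Proof.
move=> H.
have ZL := ipZl _ _ H; have ZR := ipZr _ _ H; have DL := ipDl _ _ H; have DR := ipDr _ _ H.
have BL := ipBl _ _ H; have BR := ipBr _ _ H; have CC := ipC _ _ H; have PP := ippos _ _ H.
pose E0 := d21_e R 0; pose E1 := d21_e R 1; pose E2 := d21_e R 2.
pose n3 := ip E2 E2.
pose w2 := E1 - (ip E1 E2 / n3) *: E2.
pose n2 := ip w2 w2.
pose c := ip E0 w2 / n2.
pose d := ip E0 E2 / n3.
pose w1 := E0 - c *: w2 - d *: E2.
pose n1 := ip w1 w1.
have E2nz : E2 != 0.
  by apply/eqP => /matrixP /(_ 0 2); rewrite !mxE /=; move/eqP; rewrite oner_eq0.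
have w2_01 : w2 0 1 = 1 by rewrite /w2 !mxE /=; ring.
have w2_00 : w2 0 0 = 0 by rewrite /w2 !mxE /=; ring.
have w1_00 : w1 0 0 = 1 by rewrite /w1 /w2 !mxE /=; ring.
have w2nz : w2 != 0 by apply/eqP => /matrixP /(_ 0 1); rewrite w2_01 mxE; move/eqP; rewrite oner_eq0.
have w1nz : w1 != 0 by apply/eqP => /matrixP /(_ 0 0); rewrite w1_00 mxE; move/eqP; rewrite oner_eq0.
have n3p : 0 < n3 := PP _ E2nz.
have n2p : 0 < n2 := PP _ w2nz.
have n1p : 0 < n1 := PP _ w1nz.
have o23 : ip w2 E2 = 0.
  by rewrite /w2 BL ZL -/n3 divfK ?subrr // gt_eqF.
have o32 : ip E2 w2 = 0 by rewrite CC o23 conjC0.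
have o12 : ip w1 w2 = 0.
  by rewrite /w1 !BL !ZL -/n2 o32 mulr0 subr0 /c divfK ?subrr // gt_eqF.
have o21 : ip w2 w1 = 0 by rewrite CC o12 conjC0.
have o13 : ip w1 E2 = 0.
  by rewrite /w1 !BL !ZL -/n3 o23 mulr0 subr0 /d divfK ?subrr // gt_eqF.
have o31 : ip E2 w1 = 0 by rewrite CC o13 conjC0.
pose al := sqrtC (n2 / n3).
pose a := sqrtC (n2 / n1).
pose k := n3 / n2 ^+ 2.
have alp : 0 < al by rewrite sqrtC_gt0 divr_gt0.
have ap : 0 < a by rewrite sqrtC_gt0 divr_gt0.
have kp : 0 < k by rewrite divr_gt0 // exprn_gt0.
have alc : al^* = al by rewrite geC0_conj // ltW.
have ac : a^* = a by rewrite geC0_conj // ltW.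
have al2 : al ^+ 2 = n2 / n3 by rewrite sqrtCK.
have a2 : a ^+ 2 = n2 / n1 by rewrite sqrtCK.
have n1nz : n1 != 0 by rewrite gt_eqF.
have n2nz : n2 != 0 by rewrite gt_eqF.
have n3nz : n3 != 0 by rewrite gt_eqF.
have alnz : al != 0 by rewrite gt_eqF.
have anz : a != 0 by rewrite gt_eqF.
pose P : 'M[R[i]]_3 := \matrix_(i < 3) (if i == 0 then al *: w1 else if i == 1 then al *: w2 else al ^+ 2 *: E2).
have rowP0 : d21_e R 0 *m P = al *: w1 by rewrite /d21_e -rowE rowK.
have rowP1 : d21_e R 1 *m P = al *: w2 by rewrite /d21_e -rowE rowK.
have rowP2 : d21_e R 2 *m P = al ^+ 2 *: E2 by rewrite /d21_e -rowE rowK.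
exists k, a, (fun x => x *m P); split => //.
have E2_0 : E2 0 0 = 0 by rewrite !mxE.
have E2_1 : E2 0 1 = 0 by rewrite !mxE.
have E2_2 : E2 0 2 = 1 by rewrite !mxE.
have Pu : P \in unitmx.
  rewrite unitmxE unitfE det3_ut; rewrite ?mxE /=.
  all: try (by rewrite !mulr0 ?subrr ?mulr0).
  rewrite (_ : _ * _ * _ = al ^+ 4); [by rewrite expf_neq0 | ring].
split.
- by move=> c0 x y; rewrite mulmxDl scalemxAl.
- exists (fun x => x *m invmx P) => x; [exact: mulmxK | exact: mulmxKV].
move=> x y.
rewrite /d21_mul -scalemxAl rowP2 scalerA; congr (_ *: _).
rewrite !mul3 !mxE /=.
ring.
have n2e : n2 = al ^+ 2 * n3 by rewrite al2 divfK.
have n1e : n1 = al ^+ 2 * n3 / a ^+ 2 by rewrite a2 -n2e invf_div mulrC divfK.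
split.
  rewrite (_ : \matrix_(i < 3) _ = \matrix_(i < 3) (if i == 0 then a *: (al *: w1) else if i == 1 then al *: w2 else al ^+ 2 *: E2)).
    rewrite row_free_unit unitmxE unitfE det3_ut !mxE /=.
    all: try (by rewrite !mulr0 ?subrr ?mulr0).
    rewrite (_ : _ * _ * _ = a * al ^+ 4); [by rewrite mulf_neq0 ?expf_neq0 | ring].
  apply/matrixP => i j; rewrite mxE [RHS]mxE /d21_e -!rowE !rowK /=.
  by case: (i == 0).
move=> i j; rewrite /d21_e -!rowE !rowK.
case: i => [[|[|[|?]]] hi] //; case: j => [[|[|[|?]]] hj] //=.
all: rewrite /k !ZL !ZR ?ac ?alc ?o12 ?o21 ?o13 ?o31 ?o23 ?o32 ?mulr0 ?mul0r -/n1 -/n2 -/n3 //.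
all: rewrite ?rmorphXn /= ?alc ?n1e n2e; field.
all: by rewrite ?alnz ?anz ?n3nz ?expf_neq0 ?mulf_neq0.
Qed.
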